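(* Every metric family with weak finite decomposition complexity also has straight finite decomposition complexity. In fact, the collection $s\mathfrak{D}$ of metric families with straight finite decomposition complexity is stable under weak decomposition.
   Context: A metric family is a set of metric spaces; it is uniformly bounded if $\sup\{\mathrm{diam}(Z): Z\in\mathcal{Z}\}<\infty$. Subsets $A,B$ are $r$-disjoint if $d(A,B)>r$. A $(k,r)$-decomposition of a metric space $X$ over a metric family $\mathcal{Y}$ is a decomposition $X=X_0\cup X_1\cup\cdots\cup X_{k-1}$ with each $X_i=\bigsqcup_j X_{ij}$ a union of pairwise $r$-disjoint subsets and each $X_{ij}\in\mathcal{Y}$. A family $\mathcal{X}$ is $(k,r)$-decomposable over $\mathcal{Y}$ if every member of $\mathcal{X}$ admits a $(k,r)$-decomposition over $\mathcal{Y}$; for $k=2$ this is called $r$-decomposable. For a collection $\mathfrak{U}$ of metric families, $\mathcal{X}$ is $k$-decomposable over $\mathfrak{U}$ if for every $r>0$ there is $\mathcal{Y}_r\in\mathfrak{U}$ such that $\mathcal{X}$ is $(k,r)$-decomposable over $\mathcal{Y}_r$; $\mathcal{X}$ is weakly decomposable over $\mathfrak{U}$ if it is $k$-decomposable over $\mathfrak{U}$ for some $k\in\mathbb{N}$; $\mathfrak{U}$ is stable under weak decomposition if every family weakly decomposable over $\mathfrak{U}$ lies in $\mathfrak{U}$. The collection of families with weak finite decomposition complexity (wFDC) is the smallest collection containing all uniformly bounded families and stable under weak decomposition. A metric family $\mathcal{X}$ has straight finite decomposition complexity (sFDC) if for every sequence $R_1<R_2<\cdots$ of positive numbers there exist $n\in\mathbb{N}$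 and metric families $\mathcal{X}_0=\mathcal{X},\mathcal{X}_1,\dots,\mathcal{X}_n$ such that $\mathcal{X}_i$ is $R_{i+1}$-decomposable over $\mathcal{X}_{i+1}$ for each $i<n$ and $\mathcal{X}_n$ is uniformly bounded; $s\mathfrak{D}$ denotes the collection of such families. *)

(* Defs.v *)
From Stdlib Require Import Reals Lra ProofIrrelevance.
Open Scope R_scope.

Record MetricSpace := {
  carrier :> Type;
  dist : carrier -> carrier -> R;
  dist_nonneg : forall x y, 0 <= dist x y;
  dist_eq0 : forall x y, dist x y = 0 <-> x = y;
  dist_sym : forall x y, dist x y = dist y x;
  dist_tri : forall x y z, dist x z <= dist x y + dist y z
}.

Arguments dist {m} _ _.

Definition MetricFamily := MetricSpace -> Prop.

Section Subspace.
Variables (X : MetricSpace) (A : X -> Prop).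
Definition sub_carrier := {x : X | A x}.
Definition sub_dist (x y : sub_carrier) : R := dist (proj1_sig x) (proj1_sig y).
Lemma sub_dist_nonneg x y : 0 <= sub_dist x y.
Proof. apply dist_nonneg. Qed.
Lemma sub_dist_eq0 x y : sub_dist x y = 0 <-> x = y.
Proof.
  unfold sub_dist; split.
  - intros H; apply dist_eq0 in H. destruct x as [x hx], y as [y hy]; simpl in H.
    subst y. f_equal. apply proof_irrelevance.
  - intros ->; apply dist_eq0; reflexivity.
Qed.
Lemma sub_dist_sym x y : sub_dist x y = sub_dist y x.
Proof. apply dist_sym. Qed.
Lemma sub_dist_tri x y z : sub_dist x z <= sub_dist x y + sub_dist y z.
Proof. apply dist_tri. Qed.
Definition subspace : MetricSpace :=
  {| carrier := sub_carrier; dist := sub_dist; dist_nonneg := sub_dist_nonneg;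
     dist_eq0 := sub_dist_eq0; dist_sym := sub_dist_sym; dist_tri := sub_dist_tri |}.
End Subspace.

Definition uniformly_bounded (F : MetricFamily) : Prop :=
  exists B : R, forall Z : MetricSpace, F Z -> forall x y : Z, dist x y <= B.

(** A and B are r-disjoint: d(A,B) = inf {d(a,b)} > r
    (with inf of the empty set = +oo). *)
Definition r_disjoint (X : MetricSpace) (r : R) (A B : X -> Prop) : Prop :=
  exists s : R, r < s /\ forall a b : X, A a -> B b -> s <= dist a b.

(** A (k,r)-decomposition of X over Y: X = X_0 u ... u X_{k-1}, where
    X_i is the union of the subsets X_ij (j ranging over an index type J i),
    pairwise r-disjoint, and each X_ij (as a metric subspace) belongs to Y. *)
Definition kr_decomposition (k : nat) (r : R) (X : MetricSpace) (Y : MetricFamily) : Prop :=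
  exists (J : nat -> Type) (U : forall i : nat, J i -> X -> Prop),
    (forall x : X, exists i : nat, (i < k)%nat /\ exists j : J i, U i j x) /\
    (forall i : nat, (i < k)%nat -> forall j j' : J i, j <> j' -> r_disjoint X r (U i j) (U i j')) /\
    (forall i : nat, (i < k)%nat -> forall j : J i, Y (subspace X (U i j))).

Definition kr_decomposable (k : nat) (r : R) (Xf Y : MetricFamily) : Prop :=
  forall X : MetricSpace, Xf X -> kr_decomposition k r X Y.

Definition r_decomposable (r : R) (Xf Y : MetricFamily) : Prop :=
  kr_decomposable 2 r Xf Y.

Definition FamilyCollection := MetricFamily -> Prop.

Definition k_decomposable_over (k : nat) (Xf : MetricFamily) (UU : FamilyCollection) : Prop :=
  forall r : R, 0 < r -> exists Y : MetricFamily, UU Y /\ kr_decomposable k r Xf Y.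

Definition weakly_decomposable_over (Xf : MetricFamily) (UU : FamilyCollection) : Prop :=
  exists k : nat, k_decomposable_over k Xf UU.

Definition stable_under_weak_decomposition (UU : FamilyCollection) : Prop :=
  forall Xf : MetricFamily, weakly_decomposable_over Xf UU -> UU Xf.

(** wFDC: the smallest collection containing all uniformly bounded families
    and stable under weak decomposition (intersection of all such collections). *)
Definition wFDC (Xf : MetricFamily) : Prop :=
  forall UU : FamilyCollection,
    (forall Y, uniformly_bounded Y -> UU Y) ->
    stable_under_weak_decomposition UU -> UU Xf.

(** sFDC.  The sequence R_1 < R_2 < ... is represented by Rs : nat -> R with
    Rs i = R_{i+1}. *)
Definition sFDC (Xf : MetricFamily) : Prop :=
  forall Rs : nat -> R,
    (forall i, 0 < Rs i) -> (forall i, Rs i < Rs (S i)) ->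
    exists (n : nat) (F : nat -> MetricFamily),
      F 0%nat = Xf /\
      (forall i : nat, (i < n)%nat -> r_decomposable (Rs i) (F i) (F (S i))) /\
      uniformly_bounded (F n).

(* Main.v *)
Require Import Defs.
From Stdlib Require Import Reals Lra Lia Arith ProofIrrelevance.
Open Scope R_scope.

Definition iso (Z Z' : MetricSpace) : Prop :=
  exists (f : Z -> Z') (g : Z' -> Z),
    (forall x, g (f x) = x) /\ (forall y, f (g y) = y) /\
    (forall x y, Defs.dist (f x) (f y) = Defs.dist x y).

Definition isoC (P : MetricFamily) : MetricFamily :=
  fun Z => exists Z', P Z' /\ iso Z Z'.

Lemma iso_refl Z : iso Z Z.
Proof. exists (fun x => x), (fun x => x). auto. Qed.

Lemma iso_sym A B : iso A B -> iso B A.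
Proof.
  intros [f [g [h1 [h2 h3]]]]. exists g, f. split; [exact h2|split; [exact h1|]].
  intros x y. rewrite <- h3, !h2. reflexivity.
Qed.

Lemma iso_trans A B C : iso A B -> iso B C -> iso A C.
Proof.
  intros [f [g [h1 [h2 h3]]]] [f' [g' [h1' [h2' h3']]]].
  exists (fun x => f' (f x)), (fun y => g (g' y)).
  split; [intros x; rewrite h1'; apply h1|split; [intros y; rewrite h2; apply h2'|]].
  intros x y; rewrite h3'; apply h3.
Qed.

Lemma isoC_incl (P : MetricFamily) Z : P Z -> isoC P Z.
Proof. intros H; exists Z; split; [exact H| apply iso_refl]. Qed.

Lemma sig_ext {T} (P : T -> Prop) (a b : {x | P x}) : proj1_sig a = proj1_sig b -> a = b.
Proof. destruct a as [a ha], b as [b hb]; simpl; intros ->. f_equal; apply proof_irrelevance. Qed.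

Lemma iso_pull (Z Z' : MetricSpace) (f : Z -> Z') (g : Z' -> Z)
  (h1 : forall x, g (f x) = x) (h2 : forall y, f (g y) = y)
  (h3 : forall x y, Defs.dist (f x) (f y) = Defs.dist x y) (A : Z' -> Prop) :
  iso (subspace Z (fun z => A (f z))) (subspace Z' A).
Proof.
  unshelve eexists.
  { intros [z hz]. exact (exist _ (f z) hz). }
  unshelve eexists.
  { intros [y hy]. exists (g y). rewrite h2. exact hy. }
  split; [|split].
  - intros [z hz]. apply sig_ext. simpl. apply h1.
  - intros [y hy]; apply sig_ext; simpl; apply h2.
  - intros [x hx] [y hy]; simpl. unfold sub_dist; simpl. apply h3.
Qed.

Lemma iso_nest (X : MetricSpace) (A B : X -> Prop) (hBA : forall x, B x -> A x) :
  iso (subspace (subspace X A) (fun w => B (proj1_sig w))) (subspace X B).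
Proof.
  unshelve eexists.
  { intros [[x ha] hb]. exact (exist _ x hb). }
  unshelve eexists.
  { intros [x hb]. exact (exist _ (exist _ x (hBA x hb)) hb). }
  split; [|split].
  - intros [[x ha] hb]. apply sig_ext. apply sig_ext. reflexivity.
  - intros [x hb]. apply sig_ext. reflexivity.
  - intros [[x ha] hb] [[y ha'] hb']. reflexivity.
Qed.

Lemma iso_full (X : MetricSpace) (A : X -> Prop) (hA : forall x, A x) : iso X (subspace X A).
Proof.
  exists (fun x => exist A x (hA x)), (fun w => proj1_sig w).
  split; [intros x; reflexivity|split].
  - intros [x hx]. apply sig_ext. reflexivity.
  - intros x y; reflexivity.
Qed.

Lemma transport k r (Z Z' : MetricSpace) (Q : MetricFamily) :
  iso Z Z' -> kr_decomposition k r Z' (isoC Q) -> kr_decomposition k r Z (isoC Q).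
Proof.
  intros [f [g [h1 [h2 h3]]]].
  intros [J [U [Hc [Hd Hp]]]].
  exists J, (fun i j z => U i j (f z)). split; [|split].
  - intros x. destruct (Hc (f x)) as [i [hi [j hj]]]. exists i; split; [exact hi| exists j; exact hj].
  - intros i hi j j' hjj'. destruct (Hd i hi j j' hjj') as [s [hs hs']]. exists s; split; [exact hs|].
    intros a b ha hb. rewrite <- h3. apply hs'; assumption.
  - intros i hi j. destruct (Hp i hi j) as [Z'' [hQ hiso]]. exists Z''. split; [exact hQ|].
    eapply iso_trans; [apply (iso_pull Z Z' f g h1 h2 h3)|exact hiso].
Qed.

Lemma decomp_mono k r X (Q T : MetricFamily) : (forall Z, Q Z -> T Z) ->
  kr_decomposition k r X Q -> kr_decomposition k r X (isoC T).
Proof.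
  intros HQT [J [U [Hc [Hd Hp]]]]. exists J, U. split; [exact Hc|split; [exact Hd|]].
  intros i hi j. apply isoC_incl, HQT, Hp, hi.
Qed.

Lemma lift r (P Q : MetricFamily) :
  (forall Z, P Z -> kr_decomposition 2 r Z (isoC Q)) -> r_decomposable r (isoC P) (isoC Q).
Proof.
  intros H Z [Z' [hP hiso]]. eapply transport; [exact hiso| apply H, hP].
Qed.

Lemma trivial_decomp r Z (T : MetricFamily) : T Z -> kr_decomposition 2 r Z (isoC T).
Proof.
  intros hT.
  exists (fun i => match i with 0%nat => unit | _ => Empty_set end), (fun i j z => True).
  split; [|split].
  - intros x. exists 0%nat. split; [lia| exists tt; exact I].
  - intros i hi j j' hjj'. destruct i as [|i].
    + destruct j, j'. exfalso; apply hjj'; reflexivity.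
    + destruct j.
  - intros i hi j. destruct i as [|i].
    + exists Z. split; [exact hT|]. apply iso_sym, iso_full. intros; exact I.
    + destruct j.
Qed.

Definition Dvalid (k : nat) (r : R) (X : MetricSpace) (Y : MetricFamily)
  (J : nat -> Type) (U : forall i : nat, J i -> X -> Prop) : Prop :=
    (forall x : X, exists i : nat, (i < k)%nat /\ exists j : J i, U i j x) /\
    (forall i : nat, (i < k)%nat -> forall j j' : J i, j <> j' -> r_disjoint X r (U i j) (U i j')) /\
    (forall i : nat, (i < k)%nat -> forall j : J i, Y (subspace X (U i j))).

Definition rem (k : nat) (X : MetricSpace) (J : nat -> Type) (U : forall i, J i -> X -> Prop)
  (m : nat) (x : X) : Prop :=
  exists i, (m <= i)%nat /\ (i < k)%nat /\ exists j : J i, U i j x.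

Definition Rem (Xf : MetricFamily) (k : nat) (r : R) (Y : MetricFamily) (m : nat) : MetricFamily :=
  fun W => exists (X : MetricSpace) (J : nat -> Type) (U : forall i, J i -> X -> Prop),
     Xf X /\ Dvalid k r X Y J U /\ W = subspace X (rem k X J U m).

Lemma rem_decomp Xf k r Y m R0 (T : MetricFamily) X J U :
  Xf X -> Dvalid k r X Y J U ->
  ((m < k)%nat -> R0 <= r) ->
  ((m < k)%nat -> forall Z, Y Z -> T Z) ->
  (forall Z, Rem Xf k r Y (S m) Z -> T Z) ->
  kr_decomposition 2 R0 (subspace X (rem k X J U m)) (isoC T).
Proof.
  intros hX [Hc [Hd Hp]] hR hY hRem.
  exists (fun i => match i with 0%nat => {j : J m | (m < k)%nat} | _ => unit end).
  exists (fun i => match i return (match i with 0%nat => {j : J m | (m < k)%nat} | _ => unit end) ->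
                               subspace X (rem k X J U m) -> Prop with
            | 0%nat => fun jj w => U m (proj1_sig jj) (proj1_sig w)
            | S _ => fun _ w => rem k X J U (S m) (proj1_sig w) end).
  split; [|split].
  - intros [x [i [hmi [hik [j hj]]]]].
    destruct (Nat.eq_dec i m) as [->|hne].
    + exists 0%nat. split; [lia|]. exists (exist _ j hik). exact hj.
    + exists 1%nat. split; [lia|]. exists tt. simpl. exists i.
      split; [lia|split; [exact hik| exists j; exact hj]].
  - intros i hi jj jj' hne. destruct i as [|[|i]]; [| |lia].
    + destruct jj as [j hj], jj' as [j' hj']. assert (j <> j') as hjj.
      { intros ->. apply hne. f_equal. apply proof_irrelevance. }
      destruct (Hd m hj j j' hjj) as [s [hs hs']]. exists s. split; [specialize (hR hj); lra|].
      intros a b ha hb. simpl. unfold sub_dist. apply hs'; assumption.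
    + destruct jj, jj'. exfalso; apply hne; reflexivity.
  - intros i hi jj. destruct i as [|[|i]]; [| |lia].
    + destruct jj as [j hj]. exists (subspace X (U m j)). split.
      * apply (hY hj), (Hp m hj).
      * apply (iso_nest X (rem k X J U m) (U m j)). intros x hx. exists m.
        split; [lia|split;[exact hj|exists j; exact hx]].
    + exists (subspace X (rem k X J U (S m))). split.
      * apply hRem. exists X, J, U. split; [exact hX|split; [split; [exact Hc|split; assumption]|reflexivity]].
      * apply (iso_nest X (rem k X J U m) (rem k X J U (S m))).
        intros x [i [h1 [h2 h3]]]. exists i. split; [lia|split; assumption].
Qed.

Lemma Rs_mono (Rs : nat -> R) : (forall i, Rs i < Rs (S i)) -> forall a b, (a < b)%nat -> Rs a < Rs b.
Proof. intros H a b hab. induction hab; [apply H| specialize (H m); lra]. Qed.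

Lemma stable : stable_under_weak_decomposition sFDC.
Proof.
  intros Xf [k Hk] Rs Rpos Rinc.
  destruct (Hk (Rs k) (Rpos k)) as [Yr [HY HXY]].
  destruct (HY (fun i => Rs (k + i)%nat) (fun i => Rpos _)) as [n [H [H0 [Hst Hb]]]].
  { intros i. simpl. rewrite Nat.add_succ_r. apply Rinc. }
  set (P := fun m : nat => fun Z => H (Nat.min (m - k) n) Z \/ Rem Xf k (Rs k) Yr m Z).
  exists (S (k + n)), (fun m => match m with 0%nat => Xf | S _ => isoC (P m) end).
  split; [reflexivity|split].
  - intros i hi. destruct i as [|m].
    + intros X hX.
      destruct (HXY X hX) as [J [U D]].
      apply (transport _ _ X (subspace X (rem k X J U 0%nat))).
      { apply iso_full. intros x. destruct D as [Hc _]. destruct (Hc x) as [i [hi' hj]].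
        exists i. split; [lia|split; assumption]. }
      apply (rem_decomp Xf k (Rs k) Yr 0%nat (Rs 0%nat) (P 1%nat) X J U hX D).
      * intros hk. apply Rlt_le, Rs_mono; assumption.
      * intros hk Z hZ. left. replace (Nat.min (1 - k) n) with 0%nat by lia. rewrite H0. exact hZ.
      * intros Z hZ. right. exact hZ.
    + apply lift. intros Z [hQ | hRm].
      * destruct (le_lt_dec k (S m)) as [l1|l1]; [destruct (lt_dec (S m - k) n) as [l2|l2]|].
        -- pose proof (Hst (S m - k)%nat l2) as Hs. cbv beta in Hs.
           replace (k + (S m - k))%nat with (S m) in Hs by lia.
           replace (Nat.min (S m - k) n) with (S m - k)%nat in hQ by lia.
           apply (decomp_mono _ _ _ (H (S (S m - k)))).
           { intros Z' hZ'. left. replace (Nat.min (S (S m) - k) n) with (S (S m - k)) by lia. exact hZ'. }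
           apply Hs, hQ.
        -- apply trivial_decomp. left.
           replace (Nat.min (S (S m) - k) n) with (Nat.min (S m - k) n) by lia. exact hQ.
        -- apply trivial_decomp. left.
           replace (Nat.min (S (S m) - k) n) with (Nat.min (S m - k) n) by lia. exact hQ.
      * destruct hRm as [X [J [U [hX [D ->]]]]].
        apply (rem_decomp Xf k (Rs k) Yr (S m) (Rs (S m)) (P (S (S m))) X J U hX D).
        -- intros hk. apply Rlt_le, Rs_mono; assumption.
        -- intros hk Z hZ. left. replace (Nat.min (S (S m) - k) n) with 0%nat by lia.
           rewrite H0. exact hZ.
        -- intros Z hZ. right. exact hZ.
  - destruct Hb as [B HB]. exists B. intros Z [Z' [hP [f [g [h1 [h2 h3]]]]]] x y.
    rewrite <- h3. destruct hP as [hQ | hRm].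
    + replace (Nat.min (S (k + n) - k) n) with n in hQ by lia. apply HB; exact hQ.
    + exfalso. destruct hRm as [X [J [U [_ [_ ->]]]]].
      destruct (f x) as [x' [i [h1' [h2' _]]]]. lia.
Qed.

Theorem proposition4p7 :
  (forall Xf : MetricFamily, wFDC Xf -> sFDC Xf) /\
  stable_under_weak_decomposition sFDC.
Proof.
  split; [|exact stable].
  intros Xf HW. apply HW; [|exact stable].
  intros Y HY Rs _ _. exists 0%nat, (fun _ => Y).
  split; [reflexivity|split; [intros; lia|exact HY]].
Qed.
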